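(* Let $(\Omega,\mathcal{A},\sigma)$ be a probability space and let $f,g\in L^2(\sigma)$ satisfy $\sigma(\{|fg|=0\})=0$. Then (A) $\mathcal{E}(f\wedge g)\le\mathcal{E}(f)+\mathcal{E}(g)$; (B) $\mathcal{E}(f\vee g)\le\mathcal{E}(f)+\mathcal{E}(g)$; (C) $\mathcal{E}(f\wedge f^2)\le4\,\mathcal{E}(f)$.
   Context: $\mathcal{E}(h)=\int_\Omega|h|^2\,d\sigma-\exp\left(\int_\Omega\log|h|^2\,d\sigma\right)$. For measurable $f,g$, $f\wedge g$ (resp. $f\vee g$) denotes a measurable function with $|f\wedge g|=\min(|f|,|g|)$ (resp. $|f\vee g|=\max(|f|,|g|)$) pointwise (e.g. equal to $g$ where $|g|\le|f|$ and to $f$ elsewhere); $\mathcal{E}$ depends only on the modulus. *)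

(* Defs.v *)
From HB Require Import structures.
From mathcomp Require Import all_boot all_order all_algebra.
From mathcomp Require Import all_classical all_reals all_analysis.
Set Implicit Arguments. Unset Strict Implicit. Unset Printing Implicit Defensive.
Import Order.TTheory GRing.Theory Num.Theory.
Local Open Scope classical_set_scope.
Local Open Scope ring_scope.
Local Open Scope ereal_scope.

Definition elog {R : realType} (x : R) : \bar R :=
  if (0 < x)%R then (ln x)%:E else -oo.

Definition Efun {d : measure_display} {T : measurableType d} {R : realType}
  (sigma : probability T R) (h : T -> R) : \bar R :=
  \int[sigma]_x ((`|h x| ^+ 2)%R)%:E
  - expeR (\int[sigma]_x elog (`|h x| ^+ 2)%R).

Definition inL2 {d : measure_display} {T : measurableType d} {R : realType}
  (sigma : probability T R) (h : T -> R) : Prop :=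
  measurable_fun setT h /\ \int[sigma]_x ((`|h x| ^+ 2)%R)%:E < +oo.

(* Main.v *)
Require Import Defs.
From HB Require Import structures.
From mathcomp Require Import all_boot all_order all_algebra.
From mathcomp Require Import all_classical all_reals all_analysis.
From mathcomp Require Import ring lra.
Import Order.TTheory GRing.Theory Num.Theory.
Local Open Scope classical_set_scope.
Local Open Scope ring_scope.

Section L.
Variable R : realType.
Lemma ln_le_sub1 {z : R} : 0 < z -> ln z <= z - 1.
Proof.
move=> z0; have := expR_ge1Dx (ln z); rewrite lnK ?posrE //; lra.
Qed.

Definition f2 : R -> R := ((@id R) * (@id R) - cst 1) - 2 *: ((@id R) * (@ln R)).

Lemma dL2 (x : R) : 0 < x -> is_derive x 1 f2 (2 * x - 2 * ln x - 2).
Proof.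
move=> x0.
have Hl := is_derive1_ln x0.
have H := is_deriveB (is_deriveB (is_deriveM (is_derive_id x 1) (is_derive_id x 1)) (is_derive_cst (1:R) x 1)) (is_deriveZ 2 (is_deriveM (is_derive_id x 1) Hl)).
have -> : 2 * x - 2 * ln x - 2 = (x * 1 + x * 1 - 0 - 2 *: (x * x^-1 + ln x * 1)).
  rewrite mulr1 mulfV ?gt_eqF // /GRing.scale /=. lra.
exact: H.
Qed.

Lemma f2E y : f2 y = y*y - 1 - 2*(y * ln y).
Proof. by []. Qed.

Lemma L2 {z : R} : 1 <= z -> 2 * z * ln z <= z^+2 - 1.
Proof.
move=> z1.
have key : f2 1 <= f2 z.
  apply: (@ger0_derive1_ndecr _ f2 1 z); last 3 first.
  - exact: lexx.
  - exact: z1.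
  - exact: lexx.
  - move=> x; rewrite in_itv /= => /andP[x1 _].
    have x0 : 0 < x := lt_trans ltr01 x1. have H := dL2 x x0. exact: ex_derive.
  - move=> x; rewrite in_itv /= => /andP[x1 _].
    have x0 : 0 < x := lt_trans ltr01 x1.
    rewrite derive1E; have [_ ->] := @dL2 x x0.
    (have := @ln_le_sub1 x x0; lra).
  - apply: derivable_within_continuous => x; rewrite in_itv /= => /andP[x1 _].
    have x0 : 0 < x := lt_le_trans ltr01 x1. have H := dL2 x x0. exact: ex_derive.
move: key; rewrite !f2E ln1 expr2; lra.
Qed.

Definition f1 : R -> R := (2 *: ((@id R) - cst 1)) - (((@id R) + cst 1) * (@ln R)).
Lemma f1E y : f1 y = 2 * (y - 1) - (y + 1) * ln y.
Proof. by []. Qed.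

Lemma dL1 (x : R) : 0 < x -> is_derive x 1 f1 (1 - x^-1 - ln x).
Proof.
move=> x0.
have Hl := is_derive1_ln x0.
have H := is_deriveB (is_deriveZ 2 (is_deriveB (is_derive_id x 1) (is_derive_cst (1:R) x 1)))
   (is_deriveM (is_deriveD (is_derive_id x 1) (is_derive_cst (1:R) x 1)) Hl).
apply: (is_derive_eq H).
rewrite /GRing.scale /=. have -> : (id + cst 1) x = x + 1 by []. have xn : x != 0 by rewrite gt_eqF. field. exact: xn.
Qed.

Lemma L1 {z : R} : 0 < z -> z <= 1 -> (z + 1) * ln z <= 2 * (z - 1).
Proof.
move=> z0 z1.
have key : f1 1 <= f1 z.
  apply: (@ler0_derive1_nincr _ f1 z 1); last 3 first.
  - exact: lexx.
  - exact: z1.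
  - exact: lexx.
  - move=> x; rewrite in_itv /= => /andP[x1 _].
    have x0 : 0 < x := lt_trans z0 x1. have H := dL1 x x0. exact: ex_derive.
  - move=> x; rewrite in_itv /= => /andP[x1 _].
    have x0 : 0 < x := lt_trans z0 x1.
    rewrite derive1E; have [_ ->] := @dL1 x x0.
    have xi : 0 < x^-1 by rewrite invr_gt0.
    have := @ln_le_sub1 _ xi; rewrite lnV ?posrE //; lra.
  - apply: derivable_within_continuous => x; rewrite in_itv /= => /andP[x1 _].
    have x0 : 0 < x := lt_le_trans z0 x1. have H := dL1 x x0. exact: ex_derive.
move: key; rewrite !f1E ln1; lra.
Qed.

Definition D (k y : R) : R := y - expR k - expR k * (ln y - k).

Lemma D_ge0 k y : 0 < y -> 0 <= D k y.
Proof.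
move=> y0; rewrite /D.
have K0 : 0 < expR k := expR_gt0 k.
have z0 : 0 < y / expR k by rewrite divr_gt0.
have := ln_le_sub1 z0; rewrite ln_div ?posrE // expRK => h.
have := ler_wpM2l (ltW K0) h.
have e : expR k * (y / expR k) = y by rewrite mulrCA divff ?gt_eqF // mulr1.
lra.
Qed.

Lemma D_swap k1 k2 y1 y2 : 0 < y1 -> 0 < y2 ->
  (expR k1 - expR k2) * (ln y1 - ln y2) <= 0 ->
  D k2 y1 <= D k1 y1 + D k2 y2.
Proof.
move=> y10 y20 h.
have := @D_ge0 k1 y2 y20; rewrite /D in h * => h2.
nra.
Qed.

Lemma Kc_ge (c : R) : expR c - 1 <= expR c * c.
Proof.
have := @expR_ge1Dx R (- c); rewrite expRN => h.
have K0 := expR_gt0 c.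
have := ler_wpM2l (ltW K0) h; rewrite mulfV ?gt_eqF //; nra.
Qed.

Lemma Kc_le0 (c : R) : c <= 0 -> expR c ^+ 2 - 1 <= 2 * expR c * c.
Proof.
move=> c0.
have z1 : 1 <= expR (- c) by rewrite -expR0 ler_expR; lra.
have := L2 z1; rewrite expRK expRN => h.
have K0 := expR_gt0 c.
have e : expR c * (expR c)^-1 = 1 by rewrite mulfV ?gt_eqF.
set K := expR c in h e K0 *; set w := K^-1 in h e.
have := ler_wpM2l (ltW (mulr_gt0 K0 K0)) h.
nra.
Qed.

Lemma D_C (c y : R) : 0 < y ->
  D (if c <= 0 then 2 * c else c) (Num.min y (y ^+ 2)) <= 4 * D c y.
Proof.
move=> y0.
have K0 := expR_gt0 c.
have hD := @D_ge0 c y y0.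
have ly2 : ln (y ^+ 2) = 2 * ln y by rewrite lnXn // mulr2n; ring.
have eK2 : expR (2 * c) = expR c ^+ 2 by rewrite -expRM_natl.
case: (leP y 1) => y1; case: (leP c 0) => c0.
-
  have -> : Num.min y (y ^+ 2) = y ^+ 2.
    by apply/min_idPr; rewrite expr2; nra.
  rewrite /D ly2 eK2.
  have K1 : expR c <= 1 by rewrite expR_le1.
  set K := expR c in K0 K1 hD *.
  pose z := y / K.
  have z0 : 0 < z by rewrite divr_gt0.
  have ey : y = K * z by rewrite /z mulrCA divff ?gt_eqF // mulr1.
  have el : ln y = c + ln z by rewrite /z ln_div ?posrE // expRK; ring.
  rewrite el ey.
  case: (leP z 1) => z1.
  + have hL := L1 z0 z1.
    have p1 : 0 <= 2 * K * (2 - K) * (2 * (z - 1) - (z + 1) * ln z).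
      apply: mulr_ge0; [apply: mulr_ge0; lra | lra].
    have p2 : 0 <= K * (z - 1)^+2 * (4 - K * (z + 3)).
      apply: mulr_ge0; [apply: mulr_ge0; [lra| exact: sqr_ge0] | nra].
    nra.
  + have hL := L2 (ltW z1).
    have Kz : K * z <= 1 by rewrite -ey.
    have p1 : 0 <= K * (2 - K) * ((z ^+ 2 - 1) - 2 * z * ln z).
      apply: mulr_ge0; [apply: mulr_ge0; lra | lra].
    have p2 : 0 <= K * (z - 1)^+2 * (2 - K * z - K).
      apply: mulr_ge0; [apply: mulr_ge0; [lra| exact: sqr_ge0] | lra].
    nra.
-
  have -> : Num.min y (y ^+ 2) = y ^+ 2.
    by apply/min_idPr; rewrite expr2; nra.
  rewrite /D ly2.
  have K1 : 1 <= expR c by rewrite ltW // expR_gt1.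
  have hKc := Kc_ge c.
  have hl := L1 y0 y1.
  have ly0 : ln y <= 0 by rewrite ln_le0.
  set K := expR c in K0 K1 hD hKc *.
  have p1 : 0 <= (K - 1) * (- ln y) by apply: mulr_ge0; lra.
  have p2 : 0 <= (1 - y) ^+ 3 by apply: exprn_ge0; lra.
  have p3 : 0 <= (y + 1) * (4 * y - y ^+ 2 - 3 - 2 * ln y).
    nra.
  have p4 : 0 <= 4 * y - y ^+ 2 - 3 - 2 * ln y.
    by rewrite -(pmulr_rge0 _ (_ : 0 < y + 1)) //; lra.
  nra.
-
  have -> : Num.min y (y ^+ 2) = y.
    by apply/min_idPl; rewrite expr2; nra.
  rewrite /D eK2.
  have K1 : expR c <= 1 by rewrite expR_le1.
  have hKc := @Kc_le0 c c0.
  have hl := ln_le_sub1 y0.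
  set K := expR c in K0 K1 hD hKc *.
  have p1 : 0 <= K * (4 - K) * (y - 1 - ln y) by apply: mulr_ge0; [apply: mulr_ge0; lra| lra].
  have p2 : 0 <= (2 - K) * (2 * K * c - (K ^+ 2 - 1)) by apply: mulr_ge0; lra.
  have p3 : 0 <= (y - 1) * ((1 - K) * (3 - K)) by apply: mulr_ge0; nra.
  have p4 : 0 <= (1 - K) ^+ 3 by apply: exprn_ge0; lra.
  nra.
-
  have -> : Num.min y (y ^+ 2) = y.
    by apply/min_idPl; rewrite expr2; nra.
  lra.
Qed.
End L.
Arguments D {R} k y.
Arguments D_ge0 {R} k y.
Arguments D_swap {R} k1 k2 y1 y2.
Arguments D_C {R} c y.
Arguments ln_le_sub1 {R z}.


Section P.
Variable R : realType.

Definition Pr (k y : R) : \bar R := if 0 < y then (D k y)%:E else +oo%E.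
Definition P (k : \bar R) (y : R) : \bar R := if k is EFin c then Pr c y else y%:E.

Lemma ge0_nNy (x : \bar R) : (0 <= x)%E -> x != -oo%E.
Proof. by case: x. Qed.

Lemma Pr_ge0 k y : (0 <= Pr k y)%E.
Proof. rewrite /Pr; case: ifP => // y0; rewrite lee_fin; exact: D_ge0. Qed.

Lemma P_ge0 k y : 0 <= y -> (0 <= P k y)%E.
Proof. by case: k => [c||] //= y0; rewrite ?lee_fin // Pr_ge0. Qed.

Lemma Pr_pos k y : 0 < y -> Pr k y = (D k y)%:E.
Proof. by rewrite /Pr => ->. Qed.

Lemma Pr_npos k y : y <= 0 -> Pr k y = +oo%E.
Proof. by rewrite /Pr ltNge => ->. Qed.

Lemma lnle (y1 y2 : R) : 0 < y1 -> 0 < y2 -> y1 <= y2 -> ln y1 <= ln y2.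
Proof. by move=> h1 h2; rewrite ler_ln ?posrE. Qed.

Lemma PA k1 k2 y1 y2 : 0 <= y1 -> 0 <= y2 -> k1 != +oo%E -> k2 != +oo%E ->
  (P (Order.min k1 k2) (Num.min y1 y2) <= P k1 y1 + P k2 y2)%E.
Proof.
move=> y1p y2p.
case: k1 => [c1||] // _; last first.
  rewrite minNye /=.
  by rewrite -[X in (X <= _)%E]adde0 leeD ?P_ge0 // lee_fin ge_min lexx.
case: k2 => [c2||] // _; last first.
  rewrite mineNy /=.
  by rewrite -[X in (X <= _)%E]add0e leeD ?P_ge0 // ?Pr_ge0 // lee_fin ge_min lexx orbT.
rewrite -EFin_min /=.
have [y10|y10] := ltP 0 y1; last first.
  by rewrite (Pr_npos c1 y1 y10) addye ?leey // ge0_nNy // Pr_ge0.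
have [y20|y20] := ltP 0 y2; last first.
  by rewrite (Pr_npos c2 y2 y20) addey ?leey // ge0_nNy // Pr_ge0.
have m0 : 0 < Num.min y1 y2 by rewrite lt_min y10 y20.
rewrite !Pr_pos // -EFinD lee_fin.
have h1 := D_ge0 c1 y1 y10; have h2 := D_ge0 c2 y2 y20.
have [y12|y12] := leP y1 y2; have [c12|c12] := leP c1 c2.
- lra.
-
  apply: D_swap => //.
  have : ln y1 <= ln y2 by apply: lnle.
  have : expR c2 <= expR c1 by rewrite ler_expR ltW.
  nra.
-
  rewrite addrC; apply: D_swap => //.
  have : ln y2 <= ln y1 by apply: lnle => //; exact: ltW.
  have : expR c1 <= expR c2 by rewrite ler_expR.
  nra.
- lra.
Qed.

Lemma PB k1 k2 y1 y2 : 0 <= y1 -> 0 <= y2 -> k1 != +oo%E -> k2 != +oo%E ->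
  (P (Order.max k1 k2) (Num.max y1 y2) <= P k1 y1 + P k2 y2)%E.
Proof.
move=> y1p y2p.
have gen : forall c (u v : R), 0 <= u -> 0 <= v ->
    (Pr c (Num.max u v) <= u%:E + Pr c v)%E.
  move=> c u v up vp.
  have [v0|v0] := ltP 0 v; last first.
    by rewrite (Pr_npos c v v0) addey ?leey.
  have [uv|uv] := leP u v.
    by rewrite -[X in (X <= _)%E]add0e leeD // lee_fin.
  rewrite !Pr_pos //; last exact: lt_trans uv.
  rewrite -EFinD lee_fin /D.
  have : ln v <= ln u by apply: lnle => //; [exact: lt_trans uv| exact: ltW].
  have := expR_gt0 c.
  nra.
case: k1 => [c1||] // _; last first.
  rewrite maxNye /=.
  case: k2 => [c2||] //= _; last by rewrite -EFinD lee_fin; rewrite ge_max; apply/andP; split; lra.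
  exact: gen.
case: k2 => [c2||] // _; last first.
  rewrite maxeNy /= addeC maxC; exact: gen.
rewrite -EFin_max /=.
have [y10|y10] := ltP 0 y1; last first.
  by rewrite (Pr_npos c1 y1 y10) addye ?leey // ge0_nNy // Pr_ge0.
have [y20|y20] := ltP 0 y2; last first.
  by rewrite (Pr_npos c2 y2 y20) addey ?leey // ge0_nNy // Pr_ge0.
have m0 : 0 < Num.max y1 y2 by rewrite lt_max y10.
rewrite !Pr_pos // -EFinD lee_fin.
have h1 := D_ge0 c1 y1 y10; have h2 := D_ge0 c2 y2 y20.
have [y12|y12] := leP y1 y2; have [c12|c12] := leP c1 c2.
- lra.
-
  rewrite addrC; apply: D_swap => //.
  have : ln y1 <= ln y2 by apply: lnle.
  have : expR c2 <= expR c1 by rewrite ler_expR ltW.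
  nra.
-
  apply: D_swap => //.
  have : ln y2 <= ln y1 by apply: lnle => //; exact: ltW.
  have : expR c1 <= expR c2 by rewrite ler_expR.
  nra.
- lra.
Qed.

Definition Tk (k : \bar R) : \bar R :=
  if k is EFin c then EFin (if c <= 0 then 2 * c else c) else k.

Lemma PC k (y : R) : 0 <= y -> (P (Tk k) (Num.min y (y ^+ 2)%R) <= 4%:E * P k y)%E.
Proof.
move=> y0.
have m0 : 0 <= Num.min y (y ^+ 2) by rewrite le_min y0 sqr_ge0.
case: k => [c||] /=.
- have [yp|yn] := ltP 0 y; last first.
    by rewrite (Pr_npos c y yn) mulry gtr0_sg // mul1e leey.
  have mp : 0 < Num.min y (y ^+ 2) by rewrite lt_min yp exprn_gt0.
  rewrite !Pr_pos // -EFinM lee_fin; exact: D_C.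
- rewrite -EFinM lee_fin ge_min; apply/orP; left; lra.
- rewrite -EFinM lee_fin ge_min; apply/orP; left; lra.
Qed.
End P.
Arguments Pr {R} k y.
Arguments P {R} k y.
Arguments Tk {R} k.
Arguments PA {R} k1 k2 y1 y2.
Arguments PB {R} k1 k2 y1 y2.
Arguments PC {R} k y.
Arguments P_ge0 {R} k y.
Arguments Pr_ge0 {R} k y.


Import measurable_realfun.

Section M.
Variable R : realType.

Lemma measurable_elog : measurable_fun setT (@elog R).
Proof.
rewrite /elog.
apply: measurable_fun_ifT.
- apply: measurable_fun_ltr => //.
- apply: measurableT_comp => //; exact: measurable_ln.
- exact: measurable_cst.
Qed.

Lemma measurable_D (c : R) : measurable_fun setT (D c).
Proof.
rewrite /D.
apply: measurable_funB; first apply: measurable_funB => //.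
apply: measurable_funM => //.
apply: measurable_funB => //; exact: measurable_ln.
Qed.

Lemma measurable_Pr (c : R) : measurable_fun setT (Pr c).
Proof.
rewrite /Pr.
apply: measurable_fun_ifT.
- apply: measurable_fun_ltr => //.
- apply: measurableT_comp => //; exact: measurable_D.
- exact: measurable_cst.
Qed.

Lemma measurable_P (k : \bar R) : measurable_fun setT (P k).
Proof.
case: k => [c||] /=; [exact: measurable_Pr| |]; exact: EFin_measurable.
Qed.
End M.


Lemma ealg (R : realType) (X A p m : \bar R) (K r c0 : R) : 0 < K -> (0 <= X)%E -> (0 <= m)%E ->
  A \is a fin_num -> p \is a fin_num ->
  (X + (K%:E * p + c0%:E) = (A + (r + c0)%:E) + K%:E * m)%E ->
  X = (A + r%:E - K%:E * (p - m))%E.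
Proof.
move=> K0 X0 m0 /fineK <- /fineK <-.
case: m m0 => [mr| |] // m0; case: X X0 => [xr| |] // X0.
- move=> /eqP; rewrite -!EFinM -!EFinD eqe => /eqP h.
  congr EFin; lra.
- by rewrite mulry gtr0_sg // mul1e addey // -!EFinM -!EFinD.
- move=> _; rewrite mulrNy gtr0_sg // mul1e.
  by rewrite /= addey.
Qed.

Section I.
Context (d : measure_display) (T : measurableType d) (R : realType)
  (sigma : probability T R).
Variable a : T -> R.
Hypothesis ma : measurable_fun setT a.
Hypothesis a0 : forall x, 0 <= a x.
Hypothesis Afin : (\int[sigma]_x (a x)%:E < +oo)%E.

Let U x := elog (a x).

Lemma mU : measurable_fun setT U.
Proof. exact: measurableT_comp (@measurable_elog R) ma. Qed.

Lemma Up_le x : (U^\+ x <= (a x)%:E)%E.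
Proof.
rewrite funeposE /U /elog; case: ifP => ax.
  rewrite -EFin_max lee_fin ge_max a0 andbT.
  by have := ln_le_sub1 ax; lra.
by rewrite maxNye lee_fin a0.
Qed.

Lemma intUp_fin : (\int[sigma]_x U^\+ x < +oo)%E.
Proof.
apply: le_lt_trans Afin.
apply: ge0_le_integral => //.
- exact: measurable_funepos mU.
- by apply: measurableT_comp => //.
- move=> x _; exact: Up_le.
Qed.

Lemma ptwise (c : R) x :
  (Pr c (a x) + ((expR c)%:E * U^\+ x + (`|expR c * (c - 1)|)%:E) =
   ((a x)%:E + (expR c * (c - 1) + `|expR c * (c - 1)|)%:E) + (expR c)%:E * U^\- x)%E.
Proof.
have K0 := expR_gt0 c.
rewrite funeposE funenegE /U /elog /Pr.
case: ifP => ax.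
  rewrite -EFinN -!EFin_max -!EFinM -!EFinD; congr EFin.
  rewrite /D.
  have [l0|l0] := leP 0 (ln (a x)).
    rewrite max_r; [ring|lra].
  rewrite max_l; [ring|lra].
rewrite /= maxNye mule0 add0e addye // mulry gtr0_sg // mul1e addey //.
Qed.

Lemma IntP (c : R) :
  (\int[sigma]_x Pr c (a x) =
   \int[sigma]_x (a x)%:E + (expR c * (c - 1))%:E
     - (expR c)%:E * \int[sigma]_x elog (a x))%E.
Proof.
have K0 := expR_gt0 c.
set K := expR c in K0 *.
set r := K * (c - 1).
set c0 := `|r|.
have c00 : 0 <= c0 := normr_ge0 r.
have rc0 : 0 <= r + c0.
  have : - r <= c0 by rewrite /c0 -normrN ler_norm.
  lra.
have mPr : measurable_fun setT (fun x => Pr c (a x)).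
  exact: measurableT_comp (@measurable_Pr R c) ma.
have mUp := measurable_funepos mU.
have mUm := measurable_funeneg mU.
have eq1 : (\int[sigma]_x (Pr c (a x) + (K%:E * U^\+ x + c0%:E)) =
    \int[sigma]_x (((a x)%:E + (r + c0)%:E) + K%:E * U^\- x))%E.
  by apply: eq_integral => x _; exact: ptwise.
have K0' : (0 <= K%:E)%E by rewrite lee_fin ltW.
have mKUp : measurable_fun setT (fun x => (K%:E * U^\+ x)%E) by exact: measurable_funeM.
have mKUm : measurable_fun setT (fun x => (K%:E * U^\- x)%E) by exact: measurable_funeM.
have ps1 : (sigma : measure T R) [set: T] = 1%E by exact: probability_setT.
have p1 : forall x, [set: T] x -> (0 <= Pr c (a x))%E by move=> x _; exact: Pr_ge0.
have p2 : forall x, [set: T] x -> (0 <= K%:E * U^\+ x + c0%:E)%E.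
  by move=> x _; rewrite adde_ge0 ?lee_fin // mule_ge0 // funepos_ge0.
have m2 : measurable_fun setT (fun x => K%:E * U^\+ x + c0%:E)%E.
  apply: emeasurable_funD => //; exact: measurable_cst.
have p3 : forall x, [set: T] x -> (0 <= c0%:E)%E by move=> x _; rewrite lee_fin.
have m3 : measurable_fun setT (fun x : T => c0%:E) by exact: measurable_cst.
have p4 : forall x, [set: T] x -> (0 <= K%:E * U^\+ x)%E.
  by move=> x _; rewrite mule_ge0 // funepos_ge0.
have p5 : forall x, [set: T] x -> (0 <= K%:E * U^\- x)%E.
  by move=> x _; rewrite mule_ge0 // funeneg_ge0.
have p6 : forall x, [set: T] x -> (0 <= (a x)%:E + (r + c0)%:E)%E.
  by move=> x _; rewrite -EFinD lee_fin; apply: addr_ge0.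
have m6 : measurable_fun setT (fun x => (a x)%:E + (r + c0)%:E)%E.
  by apply: emeasurable_funD => //; exact: measurableT_comp.
have p7 : forall x, [set: T] x -> (0 <= (a x)%:E)%E by move=> x _; rewrite lee_fin.
have m7 : measurable_fun setT (fun x => (a x)%:E) by exact: measurableT_comp.
have p8 : forall x, [set: T] x -> (0 <= (r + c0)%:E)%E by move=> x _; rewrite lee_fin.
have m8 : measurable_fun setT (fun x : T => (r + c0)%:E) by exact: measurable_cst.
have e1 : (\int[sigma]_x (Pr c (a x) + (K%:E * U^\+ x + c0%:E)) =
    \int[sigma]_x Pr c (a x) + (K%:E * \int[sigma]_x U^\+ x + c0%:E))%E.
  rewrite ge0_integralD // ge0_integralD //.
  rewrite ge0_integralZl //.
  by rewrite integral_cst // ps1 mule1.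
have e2 : (\int[sigma]_x (((a x)%:E + (r + c0)%:E) + K%:E * U^\- x) =
    (\int[sigma]_x (a x)%:E + (r + c0)%:E) + K%:E * \int[sigma]_x U^\- x)%E.
  rewrite ge0_integralD // ge0_integralD //.
  rewrite ge0_integralZl //.
  by rewrite integral_cst // ps1 mule1.
rewrite e1 e2 {e1 e2} in eq1.
have -> : (\int[sigma]_x elog (a x) = \int[sigma]_x U^\+ x - \int[sigma]_x U^\- x)%E.
  exact: integralE.
apply: (@ealg R _ _ _ _ _ _ _ K0 _ _ _ _ eq1).
- by apply: integral_ge0 => x _; exact: Pr_ge0.
- by apply: integral_ge0 => x _; exact: funeneg_ge0.
- by rewrite ge0_fin_numE ?Afin // integral_ge0 // => x _; rewrite lee_fin.
- by rewrite ge0_fin_numE ?intUp_fin // integral_ge0 // => x _; exact: funepos_ge0.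
Qed.

Lemma L_ltoo : (\int[sigma]_x elog (a x) < +oo)%E.
Proof.
have -> : (\int[sigma]_x elog (a x) = \int[sigma]_x U^\+ x - \int[sigma]_x U^\- x)%E.
  exact: integralE.
have hp : (\int[sigma]_x U^\+ x)%E \is a fin_num.
  by rewrite ge0_fin_numE ?intUp_fin // integral_ge0 // => x _; exact: funepos_ge0.
have hm : (0 <= \int[sigma]_x U^\- x)%E by apply: integral_ge0 => x _; exact: funeneg_ge0.
move: hp hm; move: (\int[sigma]_x U^\+ x)%E (\int[sigma]_x U^\- x)%E => p m /fineK <-.
by case: m => [mr| |] //= _; rewrite ?ltry // -EFinB ltry.
Qed.

Lemma A_fin : (\int[sigma]_x (a x)%:E)%E \is a fin_num.
Proof. by rewrite ge0_fin_numE ?Afin // integral_ge0 // => x _; rewrite lee_fin. Qed.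

Lemma E_le k : k != +oo%E ->
  (\int[sigma]_x (a x)%:E - expeR (\int[sigma]_x elog (a x))
     <= \int[sigma]_x P k (a x))%E.
Proof.
have Lt := L_ltoo.
move: A_fin => /fineK <-.
case: k => [c||] // _.
- rewrite /= IntP -(fineK A_fin).
  move: Lt; case: (\int[sigma]_x elog (a x))%E => [l| |] // _.
  + rewrite /= -!EFinD lee_fin.
    have := @expR_ge1Dx R (l - c).
    have := expR_gt0 c.
    have e : expR l = expR (l - c) * expR c by rewrite -expRD subrK.
    rewrite e; nra.
  + by rewrite /= mulrNy gtr0_sg ?expR_gt0 // mul1e /= addey // leey.
- move: Lt; rewrite /= -(fineK A_fin).
  case: (\int[sigma]_x elog (a x))%E => [l| |] // _.
  + by rewrite /= -EFinB lee_fin; have := expR_gt0 l; lra.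
  + by rewrite /= sube0.
Qed.

Lemma E_eq :
  (\int[sigma]_x (a x)%:E - expeR (\int[sigma]_x elog (a x))
     = \int[sigma]_x P (\int[sigma]_x elog (a x)) (a x))%E.
Proof.
have Lt := L_ltoo.
move: Lt; case eL : (\int[sigma]_x elog (a x))%E => [l| |] // _.
- rewrite /= IntP eL -(fineK A_fin) /= -!EFinD; congr EFin; ring.
- by rewrite /= sube0.
Qed.
End I.
Arguments L_ltoo {d T R sigma a}.
Arguments E_le {d T R sigma a}.
Arguments E_eq {d T R sigma a}.
Arguments A_fin {d T R sigma a}.


Section G.
Context (d : measure_display) (T : measurableType d) (R : realType)
  (sigma : probability T R).

Definition Ea (a : T -> R) : \bar R :=
  (\int[sigma]_x (a x)%:E - expeR (\int[sigma]_x elog (a x)))%E.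

Lemma Lne {a : T -> R} : measurable_fun setT a -> (forall x, 0 <= a x) ->
  (\int[sigma]_x (a x)%:E < +oo)%E -> (\int[sigma]_x elog (a x) < +oo)%E.
Proof. move=> ma a0 Af; exact: (L_ltoo ma a0 Af). Qed.

Lemma mPa (k : \bar R) (a : T -> R) : measurable_fun setT a ->
  measurable_fun setT (fun x => P k (a x)).
Proof. move=> ma; exact: measurableT_comp (@measurable_P R k) ma. Qed.

Lemma genA (af ag ah : T -> R) :
  measurable_fun setT af -> measurable_fun setT ag -> measurable_fun setT ah ->
  (forall x, 0 <= af x) -> (forall x, 0 <= ag x) ->
  (\int[sigma]_x (af x)%:E < +oo)%E -> (\int[sigma]_x (ag x)%:E < +oo)%E ->
  (forall x, ah x = Num.min (af x) (ag x)) ->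
  (Ea ah <= Ea af + Ea ag)%E.
Proof.
move=> mf mg mh f0 g0 Af Ag hE.
have h0 x : 0 <= ah x by rewrite hE le_min f0 g0.
have Ah : (\int[sigma]_x (ah x)%:E < +oo)%E.
  apply: le_lt_trans Af; apply: ge0_le_integral => //.
  - by move=> x _; rewrite lee_fin.
  - exact: measurableT_comp.
  - exact: measurableT_comp.
  - by move=> x _; rewrite lee_fin hE ge_min lexx.
have Lf := Lne mf f0 Af; have Lg := Lne mg g0 Ag.
have hk : (Order.min (\int[sigma]_x elog (af x)) (\int[sigma]_x elog (ag x)) != +oo)%E.
  by rewrite -ltey gt_min Lf.
rewrite /Ea; apply: le_trans (E_le mh h0 Ah _ hk) _.
rewrite (E_eq mf f0 Af) (E_eq mg g0 Ag).
rewrite -ge0_integralD //; last 4 first.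
- by move=> x _; exact: P_ge0.
- exact: mPa.
- by move=> x _; exact: P_ge0.
- exact: mPa.
apply: ge0_le_integral => //.
- by move=> x _; exact: P_ge0.
- exact: mPa.
- by apply: emeasurable_funD; exact: mPa.
- move=> x _; rewrite hE; apply: PA => //; by rewrite -ltey.
Qed.

Lemma genB (af ag ah : T -> R) :
  measurable_fun setT af -> measurable_fun setT ag -> measurable_fun setT ah ->
  (forall x, 0 <= af x) -> (forall x, 0 <= ag x) ->
  (\int[sigma]_x (af x)%:E < +oo)%E -> (\int[sigma]_x (ag x)%:E < +oo)%E ->
  (forall x, ah x = Num.max (af x) (ag x)) ->
  (Ea ah <= Ea af + Ea ag)%E.
Proof.
move=> mf mg mh f0 g0 Af Ag hE.
have h0 x : 0 <= ah x by rewrite hE le_max f0.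
have Ah : (\int[sigma]_x (ah x)%:E < +oo)%E.
  apply: (@le_lt_trans _ _ (\int[sigma]_x ((af x)%:E + (ag x)%:E))%E).
    apply: ge0_le_integral => //.
    - by move=> x _; rewrite lee_fin.
    - exact: measurableT_comp.
    - by apply: emeasurable_funD; exact: measurableT_comp.
    - move=> x _; rewrite hE -EFinD lee_fin ge_max.
      by apply/andP; split; [rewrite lerDl|rewrite lerDr].
  rewrite ge0_integralD //; last 4 first.
  - by move=> x _; rewrite lee_fin.
  - exact: measurableT_comp.
  - by move=> x _; rewrite lee_fin.
  - exact: measurableT_comp.
  by rewrite lte_add_pinfty.
have Lf := Lne mf f0 Af; have Lg := Lne mg g0 Ag.
have hk : (Order.max (\int[sigma]_x elog (af x)) (\int[sigma]_x elog (ag x)) != +oo)%E.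
  by rewrite -ltey gt_max Lf.
rewrite /Ea; apply: le_trans (E_le mh h0 Ah _ hk) _.
rewrite (E_eq mf f0 Af) (E_eq mg g0 Ag).
rewrite -ge0_integralD //; last 4 first.
- by move=> x _; exact: P_ge0.
- exact: mPa.
- by move=> x _; exact: P_ge0.
- exact: mPa.
apply: ge0_le_integral => //.
- by move=> x _; exact: P_ge0.
- exact: mPa.
- by apply: emeasurable_funD; exact: mPa.
- move=> x _; rewrite hE; apply: PB => //; by rewrite -ltey.
Qed.

Lemma genC (af ah : T -> R) :
  measurable_fun setT af -> measurable_fun setT ah ->
  (forall x, 0 <= af x) ->
  (\int[sigma]_x (af x)%:E < +oo)%E ->
  (forall x, ah x = Num.min (af x) (af x ^+ 2)) ->
  (Ea ah <= 4%:E * Ea af)%E.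
Proof.
move=> mf mh f0 Af hE.
have h0 x : 0 <= ah x by rewrite hE le_min f0 sqr_ge0.
have Ah : (\int[sigma]_x (ah x)%:E < +oo)%E.
  apply: le_lt_trans Af; apply: ge0_le_integral => //.
  - by move=> x _; rewrite lee_fin.
  - exact: measurableT_comp.
  - exact: measurableT_comp.
  - by move=> x _; rewrite lee_fin hE ge_min lexx.
have Lf := Lne mf f0 Af.
have hk : (Tk (\int[sigma]_x elog (af x)) != +oo)%E.
  by move: Lf; case: (\int[sigma]_x elog (af x))%E.
rewrite /Ea; apply: le_trans (E_le mh h0 Ah _ hk) _.
rewrite (E_eq mf f0 Af).
have mP : measurable_fun setT (fun x => P (\int[sigma]_x elog (af x))%E (af x)) by exact: mPa.
have pP : forall x, [set: T] x -> (0 <= P (\int[sigma]_x elog (af x))%E (af x))%E.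
  by move=> x _; exact: P_ge0.
have k0 : (0 <= 4%:E :> \bar R)%E by rewrite lee_fin.
rewrite -ge0_integralZl //.
apply: ge0_le_integral => //.
- by move=> x _; exact: P_ge0.
- exact: mPa.
- by apply: measurable_funeM; exact: mPa.
- move=> x _; rewrite hE; exact: PC.
Qed.
End G.

Lemma msq {d : measure_display} {T : measurableType d} {R : realType} {h : T -> R} :
  measurable_fun setT h -> measurable_fun setT (fun x => `|h x| ^+ 2).
Proof.
move=> mh; apply: measurable_funX.
exact: measurableT_comp (@normr_measurable R setT) mh.
Qed.

Lemma minsq (R : realType) (u v : R) : 0 <= u -> 0 <= v ->
  (Num.min u v) ^+ 2 = Num.min (u ^+ 2) (v ^+ 2).
Proof.
move=> u0 v0; have [uv|uv] := leP u v.
  by apply/esym/min_idPl; rewrite !expr2; nra.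
by apply/esym/min_idPr; rewrite !expr2; nra.
Qed.

Lemma maxsq (R : realType) (u v : R) : 0 <= u -> 0 <= v ->
  (Num.max u v) ^+ 2 = Num.max (u ^+ 2) (v ^+ 2).
Proof.
move=> u0 v0; have [uv|uv] := leP u v.
  by apply/esym/max_idPr; rewrite !expr2; nra.
by apply/esym/max_idPl; rewrite !expr2; nra.
Qed.

Local Open Scope ereal_scope.

Theorem mainTheorem8 (d : measure_display) (T : measurableType d) (R : realType)
  (sigma : probability T R) (f g : T -> R) :
  inL2 sigma f -> inL2 sigma g ->
  sigma [set x | (`|f x * g x| = 0)%R] = 0 ->
  (forall h : T -> R, measurable_fun setT h ->
     (forall x, (`|h x| = Num.min `|f x| `|g x|)%R) ->
     Efun sigma h <= Efun sigma f + Efun sigma g) /\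
  (forall h : T -> R, measurable_fun setT h ->
     (forall x, (`|h x| = Num.max `|f x| `|g x|)%R) ->
     Efun sigma h <= Efun sigma f + Efun sigma g) /\
  (forall h : T -> R, measurable_fun setT h ->
     (forall x, (`|h x| = Num.min `|f x| `|f x ^+ 2|)%R) ->
     Efun sigma h <= 4%:E * Efun sigma f).
Proof.
move=> [mf Af] [mg Ag] _.
split; [|split].
- move=> h mh hE.
  apply: (@genA d T R sigma _ _ _ (msq mf) (msq mg) (msq mh)) => // x.
  by rewrite hE minsq.
- move=> h mh hE.
  apply: (@genB d T R sigma _ _ _ (msq mf) (msq mg) (msq mh)) => // x.
  by rewrite hE maxsq.
- move=> h mh hE.
  apply: (@genC d T R sigma _ _ (msq mf) (msq mh)) => // x.
  by rewrite hE normrX minsq // exprn_ge0.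
Qed.
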